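(* Consider a connected one-dimensional network of elastoplastic springs as in the context with $\mathrm{rank}(R^\top D)=q$, $q=n-2$, and no spring blocked by the displacement-controlled loadings (so $\dim U=1$). Let $\bar u$ be a fixed nonzero vector of $U$ and define $\bar c^+,\bar c^-\in\mathbb{R}^m$ by $\bar c^+_i=c_i^{\operatorname{sign}(\bar u_i)}$, $\bar c^-_i=c_i^{-\operatorname{sign}(\bar u_i)}$, where $c_i^{-1}:=c_i^-$ and $c_i^{+1}:=c_i^+$. Then for each fixed $t\ge0$, the safe load condition $(C+Ah(t))\cap U^\perp\neq\emptyset$ holds if and only if $$\langle\bar u,\bar c^++Ah(t)\rangle\cdot\langle\bar u,\bar c^-+Ah(t)\rangle\le0.$$
   Context: Spring $k$ joins left node $i_k$ to right node $j_k$; the graph is connected; $D$ is $m\times n$ with $(D\xi)_k=\xi_{j_k}-\xi_{i_k}$. $A=\mathrm{diag}(a_k)$, $a_k>0$; $c_k^-<c_k^+$; $C=\prod_k[c_k^-,c_k^+]$. Displacement-controlled loadings $\xi_{J_k}-\xi_{I_k}=l_k(t)$, incidence vectors $R^k$ with $(R^k)^\top D\xi=\xi_{J_k}-\xi_{I_k}$, $R=(R^1,\dots,R^q)$. Spring $i$ is blocked if the pairs $\{I_k,J_k\}$ contain a chain connecting its two endpoints. $U=\{x\in D\mathbb{R}^n:R^\top x=0\}$, $U^\perp$ its Euclidean orthogonal complement, $V=A^{-1}U^\perp$, $P_U$ the projection onto $U$ along $V$; $h(t)=P_UA^{-1}\bar h(t)$ with nodal forces $f(t)=-D^\top\bar h(t)$.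 *)

(* Defs.v *)
From HB Require Import structures.
From mathcomp Require Import all_boot all_order all_algebra.
Set Implicit Arguments. Unset Strict Implicit. Unset Printing Implicit Defensive.
Import Order.TTheory GRing.Theory Num.Theory.
Local Open Scope ring_scope.

Section Defs.
Variable R : realFieldType.

Definition dot m (x y : 'cV[R]_m) : R := \sum_(k < m) x k 0 * y k 0.

(* Incidence matrix of a family of pairs (i_k, j_k): row k is e_{j_k} - e_{i_k},
   so (incmx i j *m xi) k = xi_{j k} - xi_{i k}.  With the springs this is D. *)
Definition incmx m n (i j : 'I_m -> 'I_n) : 'M[R]_(m, n) :=
  \matrix_(k, l) ((l == j k)%:R - (l == i k)%:R).

Definition diagA m (a : 'I_m -> R) (x : 'cV[R]_m) : 'cV[R]_m :=
  \col_k (a k * x k 0).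
Definition invA m (a : 'I_m -> R) (x : 'cV[R]_m) : 'cV[R]_m :=
  \col_k ((a k)^-1 * x k 0).

Definition inU m n q (D : 'M[R]_(m, n)) (Rm : 'M[R]_(m, q)) (x : 'cV[R]_m) : Prop :=
  (exists xi : 'cV[R]_n, x = D *m xi) /\ Rm^T *m x = 0.

Definition inUperp m n q (D : 'M[R]_(m, n)) (Rm : 'M[R]_(m, q)) (y : 'cV[R]_m) : Prop :=
  forall x, inU D Rm x -> dot x y = 0.

Definition inV m n q (D : 'M[R]_(m, n)) (Rm : 'M[R]_(m, q)) (a : 'I_m -> R)
  (z : 'cV[R]_m) : Prop :=
  exists y, inUperp D Rm y /\ z = invA a y.

Definition inC m (cm cp : 'I_m -> R) (c : 'cV[R]_m) : Prop :=
  forall k, cm k <= c k 0 <= cp k.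

(* c_k^s for s = -1 or +1 (c^{-1} := c^-, c^{+1} := c^+).  For s = 0 (only
   arising when the corresponding component of ubar is 0, where the value is
   irrelevant) we take c^+ by convention. *)
Definition cpow m (cm cp : 'I_m -> R) (s : R) (k : 'I_m) : R :=
  if s == -1 then cm k else cp k.

(* cbar^{+} (eps = 1) and cbar^{-} (eps = -1): cbar_i = c_i^{eps * sign(u_i)} *)
Definition cbar m (cm cp : 'I_m -> R) (eps : R) (u : 'cV[R]_m) : 'cV[R]_m :=
  \col_k cpow cm cp (eps * Num.sg (u k 0)) k.

End Defs.

Definition pair_rel m n (i j : 'I_m -> 'I_n) : rel 'I_n :=
  fun x y => [exists k : 'I_m, ((i k == x) && (j k == y)) || ((i k == y) && (j k == x))].

Definition graph_connected m n (i j : 'I_m -> 'I_n) : Prop :=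
  forall x y : 'I_n, connect (pair_rel i j) x y.

Definition blocked m n q (i j : 'I_m -> 'I_n) (I J : 'I_q -> 'I_n) (k : 'I_m) : Prop :=
  connect (pair_rel I J) (i k) (j k).

Definition safe_load (R : realFieldType) m n q (D : 'M[R]_(m, n)) (Rm : 'M[R]_(m, q))
  (a cm cp : 'I_m -> R) (ht : 'cV[R]_m) : Prop :=
  exists c, inC cm cp c /\ inUperp D Rm (c + diagA a ht).

(* Main.v *)
Set Warnings "-notation-overridden,-ambiguous-paths,-notation-incompatible-prefix".
Require Import Defs.
From HB Require Import structures.
From mathcomp Require Import all_boot all_order all_algebra ring lra.
Import Order.TTheory GRing.Theory Num.Theory.
Local Open Scope ring_scope.

Lemma incmx_ones (R : realFieldType) m n (i j : 'I_m -> 'I_n) :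
  incmx R i j *m (const_mx 1 : 'cV[R]_n) = 0.
Proof.
apply/matrixP => k l; rewrite !mxE.
under eq_bigr => c _ do rewrite !mxE mulr1.
have E : forall a : 'I_n, \sum_(c < n) (c == a)%:R = 1 :> R.
  move=> a; rewrite (bigD1 a) //= eqxx big1 ?addr0 // => c /negbTE -> //.
by rewrite sumrB !E subrr.
Qed.

Lemma nz_entry (R : realFieldType) m (u : 'cV[R]_m) : u != 0 -> exists k, u k 0 != 0.
Proof.
move=> hu; apply/existsP; apply: contraR hu => /existsPn H.
apply/eqP/matrixP => k l; rewrite ord1 mxE; exact/eqP/negbNE/H.
Qed.

Lemma dimU (R : realFieldType) m n q (D : 'M[R]_(m,n)) (Rm : 'M[R]_(m,q)) (u x : 'cV[R]_m) :
  D *m (const_mx 1 : 'cV[R]_n) = 0 -> \rank (Rm^T *m D) = q -> (q+2)%N = n ->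
  inU D Rm u -> u != 0 -> inU D Rm x -> exists l, x = l *: u.
Proof.
move=> D1 rk qn [[xi2 hu] Ru] unz [[xi1 hx] Rx].
set M := Rm^T *m D.
pose o : 'rV[R]_n := const_mx 1.
pose S : 'M[R]_(1 + (1 + 1), n) := col_mx o (col_mx xi1^T xi2^T).
have SK : S *m M^T = 0.
  have H0 : (const_mx 1 : 'rV[R]_n) *m M^T = 0.
    by rewrite -(@trmx_const R n 1 1%R) -trmx_mul /M -mulmxA D1 mulmx0 trmx0.
  rewrite /S /o !mul_col_mx H0 -!trmx_mul /M -!mulmxA -hx -hu Rx Ru.
  by rewrite !trmx0 !col_mx0.
have rkS : (\rank S <= 2)%N.
  have := mxrankS (introT sub_kermxP SK).
  rewrite mxrank_ker mxrank_tr rk => /leq_trans; apply; by rewrite -qn addKn.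
have : kermx S != 0.
  by rewrite kermx_eq0 /row_free; apply: contraTN rkS => /eqP ->.
case/rowV0Pn => v /sub_kermxP vS vnz.
rewrite -(hsubmxK v) -(hsubmxK (rsubmx v)) /S in vS vnz.
set v0 := lsubmx v in vS vnz.
set v1 := lsubmx (rsubmx v) in vS vnz.
set v2 := rsubmx (rsubmx v) in vS vnz.
rewrite !mul_row_col in vS.
have := congr1 (fun A => A *m D^T) vS.
have Ho : o *m D^T = 0 by rewrite /o -(@trmx_const R n 1 1%R) -trmx_mul D1 trmx0.
rewrite mul0mx !mulmxDl -!mulmxA Ho mulmx0 add0r -!trmx_mul -hx -hu.
rewrite (mx11_scalar v1) (mx11_scalar v2) !mul_scalar_mx => E.
set a := v1 0 0 in E vnz; set b := v2 0 0 in E vnz.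
have Ek : forall k, a * x k 0 + b * u k 0 = 0.
  move=> k; have := congr1 (fun A : 'M[R]_(1,m) => A 0 k) E; by rewrite !mxE.
have [az|anz] := eqVneq a 0; last first.
  exists (- b / a); apply/matrixP => k l; rewrite ord1 mxE.
  have := Ek k; move/eqP; rewrite addr_eq0 => /eqP Ek'.
  apply: (mulfI anz); rewrite Ek'; field; exact anz.
have [k uk] := @nz_entry _ _ u unz.
have bz : b = 0.
  have := Ek k; rewrite az mul0r add0r => /eqP; rewrite mulf_eq0 (negbTE uk) orbF.
  by move/eqP.
have n0 : (0 < n)%N by rewrite -qn addn2.
have v0z : v0 = 0.
  rewrite (mx11_scalar v1) (mx11_scalar v2) -/a -/b az bz !mul_scalar_mx !scale0r !addr0 in vS.
  have := congr1 (fun A : 'M[R]_(1,n) => A 0 (Ordinal n0)) vS.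
  rewrite !mxE big_ord1 mxE /o mxE mulr1 => e.
  apply/matrixP => r c; rewrite !ord1 /v0 !mxE -e; congr (v _ _); exact: val_inj.
have v1z : v1 = 0 by rewrite (mx11_scalar v1) -/a az; apply/matrixP => r c; rewrite !mxE mul0rn.
have v2z : v2 = 0 by rewrite (mx11_scalar v2) -/b bz; apply/matrixP => r c; rewrite !mxE mul0rn.
move: vnz; by rewrite v0z v1z v2z !row_mx0 eqxx.
Qed.

Lemma dotDr (R : realFieldType) m (x y z : 'cV[R]_m) : dot x (y + z) = dot x y + dot x z.
Proof. rewrite /dot -big_split /=; apply: eq_bigr => k _; by rewrite mxE mulrDr. Qed.
Lemma dotZr (R : realFieldType) m (l : R) (x y : 'cV[R]_m) : dot x (l *: y) = l * dot x y.
Proof. rewrite /dot mulr_sumr; apply: eq_bigr => k _; rewrite mxE; ring. Qed.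
Lemma dotZl (R : realFieldType) m (l : R) (x y : 'cV[R]_m) : dot (l *: x) y = l * dot x y.
Proof. rewrite /dot mulr_sumr; apply: eq_bigr => k _; rewrite mxE; ring. Qed.

Lemma one_neq_m1 (R : realFieldType) : ((1 : R) == -1) = false.
Proof. apply: gt_eqF; lra. Qed.

Lemma cbar_in (R : realFieldType) m (cm cp : 'I_m -> R) eps u k :
  cm k < cp k -> cm k <= cbar cm cp eps u k 0 <= cp k.
Proof. move=> h; rewrite mxE /cpow; case: ifP => _; apply/andP; split; lra. Qed.

Lemma cbar_term (R : realFieldType) m (cm cp : 'I_m -> R) (u : 'cV[R]_m) k c :
  cm k <= c <= cp k ->
  u k 0 * cbar cm cp (-1) u k 0 <= u k 0 * c <= u k 0 * cbar cm cp 1 u k 0.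
Proof.
move=> /andP[h1 h2]; rewrite !mxE /cpow mul1r.
have [un|up|u0] := ltrgtP (u k 0) 0.
- rewrite ltr0_sg // mulrN1 opprK one_neq_m1 eqxx; apply/andP; split; nra.
- rewrite gtr0_sg // mulr1 one_neq_m1 eqxx; apply/andP; split; nra.
- by rewrite u0 !mul0r lexx.
Qed.
Arguments cbar_in {R m cm cp} eps u {k}.
Arguments cbar_term {R m cm cp} u {k c}.

Theorem proposition2 (R : realFieldType) (n m q : nat)
  (i j : 'I_m -> 'I_n) (a cm cp : 'I_m -> R)
  (I J : 'I_q -> 'I_n) (Rm : 'M[R]_(m, q))
  (hbar h : R -> 'cV[R]_m) (ubar : 'cV[R]_m) :
  graph_connected i j ->
  (forall k, 0 < a k) ->
  (forall k, cm k < cp k) ->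
  Rm^T *m incmx R i j = incmx R I J ->
  \rank (Rm^T *m incmx R i j) = q ->
  (q + 2)%N = n ->
  (forall k, ~ blocked i j I J k) ->
  (forall t, inU (incmx R i j) Rm (h t)) ->
  (forall t, inV (incmx R i j) Rm a (invA a (hbar t) - h t)) ->
  inU (incmx R i j) Rm ubar -> ubar != 0 ->
  forall t : R, 0 <= t ->
    (safe_load (incmx R i j) Rm a cm cp (h t) <->
     dot ubar (cbar cm cp 1 ubar + diagA a (h t))
       * dot ubar (cbar cm cp (-1) ubar + diagA a (h t)) <= 0).
Proof.
move=> Hconn Ha Hc HM Hrk Hqn Hnb Hh Hhb HU unz t t0.
have D1 := @incmx_ones R m n i j.
have dimu x := @dimU R m n q (incmx R i j) Rm ubar x D1 Hrk Hqn HU unz.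
have perpE : forall y, inUperp (incmx R i j) Rm y <-> dot ubar y = 0.
  move=> y; split; first by move=> H; exact: H.
  move=> H x /dimu [l ->]; by rewrite dotZl H mulr0.
set w := diagA a (h t).
set cP := cbar cm cp 1 ubar; set cM := cbar cm cp (-1) ubar.
have sMP : dot ubar cM <= dot ubar cP.
  apply: ler_sum => k _; case/andP: (cbar_term ubar (cbar_in 1 ubar (Hc k))) => h1 h2.
  exact: le_trans h1 h2.
rewrite !dotDr /safe_load; split.
- case=> c [Cc /perpE]; rewrite dotDr => E.
  have l1 : dot ubar cM <= dot ubar c.
    apply: ler_sum => k _; by case/andP: (cbar_term ubar (Cc k)).
  have l2 : dot ubar c <= dot ubar cP.
    apply: ler_sum => k _; by case/andP: (cbar_term ubar (Cc k)).
  nra.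
- move=> Hp.
  set sP := dot ubar cP in sMP Hp *; set sM := dot ubar cM in sMP Hp *; set d := dot ubar w in Hp *.
  have [hM hP] : sM + d <= 0 /\ 0 <= sP + d.
    split; nra.
  pose l := if sP - sM == 0 then 0 else - (sM + d) / (sP - sM).
  have l01 : 0 <= l <= 1.
    rewrite /l; case: eqP => e; first by apply/andP; split; lra.
    have hpos : 0 < sP - sM by rewrite lt_def; apply/andP; split; [apply/eqP|lra].
    apply/andP; split.
      by apply: divr_ge0; lra.
    by rewrite ler_pdivrMr // mul1r; lra.
  have lE : sM + d + l * (sP - sM) = 0.
    rewrite /l; case: eqP => e; first by rewrite e mulr0 addr0; nra.
    field; exact/eqP.
  exists ((1 - l) *: cM + l *: cP); split.
    move=> k; rewrite !mxE.
    case/andP: (cbar_in (-1) ubar (Hc k)) => a1 a2; case/andP: (cbar_in 1 ubar (Hc k)) => b1 b2.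
    rewrite -/cM -/cP in a1 a2 b1 b2.
    case/andP: l01 => l0 l1.
    have p1 : 0 <= (1-l)*(cM k 0 - cm k) by apply: mulr_ge0; lra.
    have p2 : 0 <= l*(cP k 0 - cm k) by apply: mulr_ge0; lra.
    have p3 : 0 <= (1-l)*(cp k - cM k 0) by apply: mulr_ge0; lra.
    have p4 : 0 <= l*(cp k - cP k 0) by apply: mulr_ge0; lra.
    rewrite /cM /cP !mxE in p1 p2 p3 p4; apply/andP; split; lra.
  apply/perpE; rewrite !dotDr !dotZr -/sP -/sM -/d; lra.
Qed.
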